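(* Let $q$ be even and let $H$ be the point-line incidence matrix of the Desarguesian projective plane $\mathrm{PG}(2,q)$, regarded as a binary matrix, and let $C=\ker(H)=\{c\in\mathbb{F}_2^{q^2+q+1} : cH^\top=0\}$ with minimum distance $d$. Then one round of the bit-flipping decoding algorithm with respect to $H$ corrects every error of Hamming weight at most $\lfloor\frac{d-1}{2}\rfloor$; that is, for every $c\in C$ and every $e\in\mathbb{F}_2^{q^2+q+1}$ with $\mathrm{wt}(e)\le\lfloor\frac{d-1}{2}\rfloor$, one round of bit-flipping applied to $y=c+e$ outputs $c$.
   Context: $\mathrm{PG}(2,q)$ is the projective plane whose points and lines are the 1- and 2-dimensional subspaces of $\mathbb{F}_q^3$; it has $q^2+q+1$ points and $q^2+q+1$ lines, each line contains $q+1$ points and each point lies on $q+1$ lines. Its incidence matrix has rows indexed by points and columns by lines, with entry $1$ iff the point lies on the line. For a binary matrix $H$ with $m$ rows, $n$ columns and constant column weight $v$, one round of the bit-flipping algorithm on input $y\in\mathbb{F}_2^n$ is: compute the syndrome $s=Hy^\top\in\mathbb{F}_2^m$; for each column $j$ let $u_j$ be the number of rows $i$ with $H_{ij}=1$ and $s_i=1$ (unsatisfied parity checks involving $j$); output $y$ with the bits in positions $\{j : u_j> v/2\}$ flipped. The Hamming weight $\mathrm{wt}(e)$ is the number of nonzero coordinates of $e$. *)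

(* Defs.v *)
From HB Require Import structures.
From mathcomp Require Import all_boot all_order all_algebra all_field.
Set Implicit Arguments. Unset Strict Implicit. Unset Printing Implicit Defensive.
Import GRing.Theory.
Local Open Scope ring_scope.

(* A k-dimensional subspace of F^3 is represented by its canonical
   row-space representative: a 3x3 matrix A with <<A>> = A and rank k.
   (mxalgebra: (A == B)%MS -> <<A>> = <<B>>, so this is a bijection.) *)
Definition subspace_of_dim (F : finFieldType) (k : nat) :=
  {A : 'M[F]_3 | (A == <<A>>%MS) && (\rank A == k)}.

Definition PGpoint (F : finFieldType) := subspace_of_dim F 1.
Definition PGline  (F : finFieldType) := subspace_of_dim F 2.

Definition PGinc (F : finFieldType) (p : PGpoint F) (l : PGline F) : bool :=
  (val p <= val l)%MS.

(* H has rows indexed by P (points), columns by L (lines);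
   H_{ij} = 1 iff inc i j.  Words are vectors in F_2^L. *)
Section Codes.
Variables (P L : finType) (inc : P -> L -> bool).

Definition syndrome (y : {ffun L -> 'F_2}) (i : P) : 'F_2 :=
  \sum_(j | inc i j) y j.

Definition code : pred {ffun L -> 'F_2} :=
  [pred c | [forall i, syndrome c i == 0]].

Definition wt (y : {ffun L -> 'F_2}) : nat := #|[set j | y j != 0]|.

(* minimum distance = minimum weight of a nonzero codeword
   (default #|L|.+1 if the code is trivial) *)
Definition mindist : nat :=
  \big[minn/#|L|.+1]_(c : {ffun L -> 'F_2} | (c \in code) && (0 < wt c)%N) wt c.

Definition unsat (y : {ffun L -> 'F_2}) (j : L) : nat :=
  #|[set i | inc i j && (syndrome y i != 0)]|.

Definition colweight (j : L) : nat := #|[set i | inc i j]|.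

(* one round of bit flipping: flip bit j iff u_j > v/2, i.e. 2 u_j > v *)
Definition bitflip (y : {ffun L -> 'F_2}) : {ffun L -> 'F_2} :=
  [ffun j => if (colweight j < 2 * unsat y j)%N then y j + 1 else y j].

End Codes.

(* Main.v *)
Require Import Defs.
From HB Require Import structures.
From mathcomp Require Import all_boot all_order all_algebra all_field all_fingroup all_solvable.
From mathcomp Require Import ring zify.
Set Implicit Arguments. Unset Strict Implicit. Unset Printing Implicit Defensive.
Import GRing.Theory.
Local Open Scope ring_scope.
Lemma bigmin_le (I : finType) (P : pred I) (F : I -> nat) x i0 :
  P i0 -> (\big[minn/x]_(i | P i) F i <= F i0)%N.
Proof.
move=> Pi0; have: i0 \in index_enum I by rewrite mem_index_enum.
elim: (index_enum I) => // a s IH; rewrite inE big_cons.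
case/orP => [/eqP<-|/IH]; first by rewrite Pi0 geq_minl.
by case: (P a) => // h; rewrite geq_min h orbT.
Qed.

Lemma char2 (F : finFieldType) : ~~ odd #|F| -> (2%:R : F) = 0.
Proof.
move=> ev.
have [p pr_p ab] := is_abelemP (@finField_is_abelem F).
have pg := abelem_pgroup ab.
have := card_pgroup pg; rewrite cardsT => cF.
have p2 : p = 2%N.
  have : (2 %| #|F|)%N by rewrite dvdn2.
  rewrite [X in (_ %| X)%N]cF.
  by rewrite Euclid_dvdX // => /andP[]; rewrite dvdn_prime2 // => /eqP.
rewrite p2 in cF; apply: pcharf0; exact: card_finPcharP cF _.
Qed.
Lemma f2_1 (x : 'F_2) : x != 0 -> x = 1.
Proof. by case: x => [[|[|n]]] //= ? ?; apply/val_inj. Qed.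

Lemma f2_11 (x : 'F_2) : x + 1 + 1 = x.
Proof. by rewrite -addrA; case: x => [[|[|n]]] //= ?; apply/val_inj. Qed.

Section BF.
Variables (P L : finType) (inc : P -> L -> bool).
Hypothesis uniq2 : forall p1 p2 l1 l2, p1 != p2 ->
  inc p1 l1 -> inc p2 l1 -> inc p1 l2 -> inc p2 l2 -> l1 = l2.

Lemma bf_correct (q : nat) c e : c \in code inc ->
  (forall l, q <= colweight inc l)%N -> (2 * wt e <= q)%N ->
  bitflip inc [ffun j => c j + e j] = c.
Proof.
move=> cC cw we.
have syn i : syndrome inc [ffun j => c j + e j] i = syndrome inc e i.
  rewrite /syndrome; under eq_bigr do rewrite ffunE.
  rewrite big_split /=; move/forallP: cC => /(_ i) /eqP.
  by rewrite /syndrome => ->; rewrite add0r.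
have un j : unsat inc [ffun j => c j + e j] j = unsat inc e j.
  by rewrite /unsat; apply: eq_card => i; rewrite !inE syn.
apply/ffunP => j0; rewrite !ffunE un.
set E := [set j | e j != 0].
have wE : wt e = #|E| by [].
have ex1 i : syndrome inc e i != 0 -> exists j, inc i j && (e j != 0).
  move=> ns; apply/existsP; move: ns; apply: contraTT => /existsPn-hn.
  rewrite negbK /syndrome big1 // => j ij.
  by move: (hn j); rewrite ij /= negbK => /eqP.
case: (eqVneq (e j0) 0) => ej0.
- rewrite ej0 addr0 ifN //; rewrite -leqNgt.
  set Z := [set i | inc i j0 && (syndrome inc e i != 0)].
  pose g i := odflt j0 [pick j | inc i j && (e j != 0)].
  have gP i : i \in Z -> inc i (g i) && (e (g i) != 0).
    rewrite inE => /andP[_ /ex1[j hj]]; rewrite /g.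
    by case: pickP => [//|/(_ j)]; rewrite hj.
  have ginj : {in Z &, injective g}.
    move=> i1 i2 Z1 Z2 geq; apply/eqP/negPn/negP => ne.
    have := gP _ Z1; have := gP _ Z2; rewrite -geq => /andP[h2 _] /andP[h1 eg].
    move: Z1 Z2; rewrite !inE => /andP[a1 _] /andP[a2 _].
    by move: eg; rewrite -(uniq2 ne a1 a2 h1 h2) ej0 eqxx.
  have : (#|Z| <= #|E|)%N.
    rewrite -(card_in_imset ginj); apply: subset_leq_card.
    by apply/subsetP => _ /imsetP[i Zi ->]; rewrite inE; case/andP: (gP _ Zi).
  have := cw j0; rewrite /unsat -/Z; lia.
- rewrite (f2_1 ej0) ifT ?f2_11 //.
  set A := [set i | inc i j0]; set B := [set i | syndrome inc e i != 0].
  have cwe : colweight inc j0 = (#|A :&: B| + #|A :\: B|)%N by rewrite cardsID.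
  have uE : unsat inc e j0 = #|A :&: B|.
    by apply: eq_card => i; rewrite !inE.
  pose g i := odflt j0 [pick j | (j != j0) && inc i j && (e j != 0)].
  have gP i : i \in A :\: B -> [&& g i != j0, inc i (g i) & (e (g i) != 0)].
    rewrite !inE => /andP[/negPn/eqP s0 a].
    have [j hj] : exists j, [&& j != j0, inc i j & (e j != 0)].
      apply/existsP; apply: contraT => /existsPn hn.
      move: s0; rewrite /syndrome (bigD1 j0) //= big1 ?addr0 ?(f2_1 ej0) //.
      move=> j /andP[ij nj]; move: (hn j); rewrite nj ij /= negbK => /eqP //.
    rewrite /g; case: pickP => [k|/(_ j)]; first by rewrite andbA.
    by rewrite -andbA hj.
  have ginj : {in A :\: B &, injective g}.
    move=> i1 i2 Z1 Z2 geq; apply/eqP/negPn/negP => ne.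
    have := gP _ Z1; have := gP _ Z2; rewrite -geq => /and3P[n0 h2 _] /and3P[_ h1 _].
    move: Z1 Z2; rewrite !inE => /andP[_ a1] /andP[_ a2].
    by move: n0; rewrite -(uniq2 ne a1 a2 h1 h2) eqxx.
  have : (#|A :\: B| <= #|E :\ j0|)%N.
    rewrite -(card_in_imset ginj); apply: subset_leq_card.
    apply/subsetP => _ /imsetP[i Zi ->]; rewrite !inE.
    by case/and3P: (gP _ Zi) => -> _ ->.
  have := cardsD1 j0 E; rewrite inE ej0 /=.
  have := cw j0; rewrite uE cwe; lia.
Qed.
End BF.
Section Geo.
Variable F : finFieldType.

Definition dot (v a : 'rV[F]_3) := \sum_(k < 3) v 0 k * a 0 k.

Lemma subsp_val k (s : subspace_of_dim F k) : val s = <<val s>>%MS /\ \rank (val s) = k.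
Proof. by case: s => A /= /andP[/eqP h /eqP r]. Qed.

Lemma subsp_inj k (s1 s2 : subspace_of_dim F k) : (val s1 == val s2)%MS -> s1 = s2.
Proof.
move/genmxP=> h; apply: val_inj.
by rewrite (subsp_val s1).1 (subsp_val s2).1.
Qed.

Lemma rep k (A : 'M[F]_3) : \rank A = k -> exists B : 'M[F]_(k,3), row_free B /\ (B == A)%MS.
Proof.
move=> <-; exists (row_base A); split; first exact: row_base_free.
by apply/eqmxP; apply: eq_row_base.
Qed.

Lemma pt_ok (w : 'rV[F]_3) : w != 0 -> (<<w>>%MS == <<<<w>>>>%MS) && (\rank <<w>>%MS == 1%N).
Proof. by move=> nz; rewrite genmx_id eqxx genmxE rank_rV nz. Qed.

Lemma ln_ok (a : 'rV[F]_3) : a != 0 ->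
  (<<kermx a^T>>%MS == <<<<kermx a^T>>>>%MS) && (\rank <<kermx a^T>>%MS == 2%N).
Proof. by move=> nz; rewrite genmx_id eqxx genmxE mxrank_ker mxrank_tr rank_rV nz. Qed.

Definition e0 : 'rV[F]_3 := delta_mx 0 0.
Lemma e0_nz : e0 != 0.
Proof. by apply/eqP => /matrixP/(_ 0 0); rewrite !mxE /= => /eqP; rewrite oner_eq0. Qed.

Definition p0 : PGpoint F := exist _ <<e0>>%MS (pt_ok e0_nz).
Definition l0 : PGline F := exist _ <<kermx e0^T>>%MS (ln_ok e0_nz).
Definition ptof (w : 'rV[F]_3) : PGpoint F := insubd p0 <<w>>%MS.
Definition lnof (a : 'rV[F]_3) : PGline F := insubd l0 <<kermx a^T>>%MS.

Lemma val_ptof w : w != 0 -> val (ptof w) = <<w>>%MS.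
Proof. by move=> nz; apply: insubdK; apply: pt_ok. Qed.
Lemma val_lnof a : a != 0 -> val (lnof a) = <<kermx a^T>>%MS.
Proof. by move=> nz; apply: insubdK; apply: ln_ok. Qed.

Lemma pt_rep (p : PGpoint F) : exists2 v, v != 0 & p = ptof v.
Proof.
have [B [fB eB]] := rep (subsp_val p).2.
have nz : B != 0 by rewrite -mxrank_eq0 (eqP fB).
exists B => //; apply: val_inj; rewrite val_ptof // (subsp_val p).1.
by apply/genmxP/eqmxP; apply: eqmx_sym; apply/eqmxP.
Qed.

Lemma mx11_eq0 (M : 'M[F]_1) : (M == 0) = (M 0 0 == 0).
Proof.
apply/eqP/eqP => [->|h]; first by rewrite mxE.
by apply/matrixP => i j; rewrite !ord1 h mxE.
Qed.

Lemma inc_pl v a : v != 0 -> a != 0 -> PGinc (ptof v) (lnof a) = (dot v a == 0).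
Proof.
move=> nv na; rewrite /PGinc val_ptof // val_lnof // !genmxE sub_kermx mx11_eq0.
by rewrite !mxE; congr (_ == _); apply: eq_bigr => k _; rewrite mxE.
Qed.

Lemma eq_sub_rank m1 m2 (A : 'M[F]_(m1,3)) (B : 'M[F]_(m2,3)) :
  (A <= B)%MS -> (\rank B <= \rank A)%N -> (A == B)%MS.
Proof.
move=> sAB le; rewrite -(mxrank_leqif_eq sAB).2 eqn_leq le andbT.
exact: mxrankS.
Qed.

Lemma two_lines (p1 p2 : PGpoint F) (l1 l2 : PGline F) : p1 != p2 ->
  PGinc p1 l1 -> PGinc p2 l1 -> PGinc p1 l2 -> PGinc p2 l2 -> l1 = l2.
Proof.
rewrite /PGinc => np s11 s21 s12 s22.
have r1 := (subsp_val p1).2; have r2 := (subsp_val p2).2.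
have cap0 : \rank (val p1 :&: val p2)%MS = 0%N.
  have := mxrankS (capmxSl (val p1) (val p2)); rewrite r1 => le1.
  case h: (\rank (val p1 :&: val p2)%MS) le1 => [//|[|//]] _.
  case/negP: np; apply/eqP; apply: subsp_inj.
  have e1 : (val p1 :&: val p2 == val p1)%MS by apply: eq_sub_rank; rewrite ?capmxSl ?h ?r1.
  have s : (val p1 <= val p2)%MS.
    by apply: submx_trans (capmxSr (val p1) (val p2)); move/eqmxP: e1 => ->.
  by apply: eq_sub_rank => //; rewrite r1 r2.
have rs : \rank (val p1 + val p2)%MS = 2%N.
  by have := mxrank_sum_cap (val p1) (val p2); rewrite cap0 r1 r2 addn0.
have E1 : (val p1 + val p2 == val l1)%MS.
  by apply: eq_sub_rank; rewrite ?addsmx_sub ?s11 ?s21 // rs (subsp_val l1).2.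
have E2 : (val p1 + val p2 == val l2)%MS.
  by apply: eq_sub_rank; rewrite ?addsmx_sub ?s12 ?s22 // rs (subsp_val l2).2.
apply: subsp_inj; apply/eqmxP; exact: eqmx_trans (eqmx_sym (eqmxP E1)) (eqmxP E2).
Qed.


Lemma line_basis (l : PGline F) : exists u v : 'rV[F]_3,
  [/\ (forall a b : F, a *: u + b *: v = 0 -> a = 0 /\ b = 0),
      (u <= val l)%MS & (v <= val l)%MS].
Proof.
have [B [fB eB]] := rep (subsp_val l).2.
have sB : (B <= val l)%MS by case/andP: eB.
exists (row 0 B), (row (lift 0 0) B); split; last 2 first.
- exact: submx_trans (row_sub _ _) sB.
- exact: submx_trans (row_sub _ _) sB.
move=> a b h.
pose r : 'rV[F]_2 := \row_(i < 2) (if i == 0 then a else b).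
have : r *m B = 0 *m B.
  by rewrite mul0mx mulmx_sum_row big_ord_recl big_ord1 !mxE /=.
move/(row_free_inj fB) => /rowP h'.
by split; [have := h' 0 | have := h' (lift 0 0)]; rewrite !mxE.
Qed.

Lemma colweight_ge (l : PGline F) : (#|F| <= colweight (@PGinc F) l)%N.
Proof.
have [u [v [ind su sv]]] := line_basis l.
have nz t : u + t *: v != 0.
  apply/eqP => h; have [] := ind 1 t; first by rewrite scale1r.
  by move/eqP; rewrite oner_eq0.
pose f t := ptof (u + t *: v).
have inj : injective f.
  move=> t s /(congr1 val); rewrite /f !val_ptof // => /genmxP/andP[h _].
  case/sub_rVP: h => k hk.
  have e : (1 - k) *: u + (t - k * s) *: v = (u + t *: v) - k *: (u + s *: v).
    by rewrite !scalerBl scale1r -scalerA scalerDr opprD addrACA.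
  have [h1 h2] : (1 - k = 0) /\ (t - k * s = 0).
    by apply: ind; rewrite e hk subrr.
  move/eqP: h1; rewrite subr_eq0 => /eqP k1; move/eqP: h2.
  by rewrite -k1 mul1r subr_eq0 => /eqP.
have sub : [set f t | t : F] \subset [set i | PGinc i l].
  apply/subsetP => _ /imsetP[t _ ->]; rewrite inE /PGinc /f val_ptof // genmxE.
  by rewrite addmx_sub ?scalemx_sub.
apply: leq_trans (subset_leq_card sub).
by rewrite card_imset.
Qed.

Hypothesis two0 : (2%:R : F) = 0.

Lemma negc2 (a : F) : - a = a.
Proof. by apply/eqP; rewrite eq_sym -addr_eq0 -mulr2n -mulr_natr two0 mulr0. Qed.

Lemma quad_roots (x y z t0 : F) : z != 0 -> x + y * t0 + z * t0 ^+ 2 = 0 ->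
  [set t | x + y * t + z * t ^+ 2 == 0] = [set t0; -(y / z) - t0].
Proof.
move=> nz h0; apply/setP => t; rewrite !inE.
have -> : x + y * t + z * t ^+ 2 = (t - t0) * (z * (t - (-(y / z) - t0))).
  have -> : x = (x + y * t0 + z * t0 ^+ 2) - y * t0 - z * t0 ^+ 2 by ring.
  by rewrite h0; field.
by rewrite !mulf_eq0 (negbTE nz) /= !subr_eq0.
Qed.

Lemma sq_inj : injective (fun t : F => t ^+ 2).
Proof.
move=> t s /= h; apply/eqP; rewrite -subr_eq0 -(sqrf_eq0 (t - s)).
by rewrite sqrrB -mulr_natr two0 mulr0 subr0 -(negc2 (s ^+ 2)) h subrr.
Qed.

Lemma parity (x y z : F) : [|| x != 0, y != 0 | z != 0] ->
  ~~ odd ((y == 0%R) + (z == 0%R) + #|[set t | (x + y * t + z * t ^+ 2 == 0)%R]|)%N.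
Proof.
move=> nz; case: (eqVneq z 0) => [z0|zn].
  have -> : [set t | x + y * t + z * t ^+ 2 == 0] =
            if y == 0 then set0 else [set - (x / y)].
    apply/setP => t; rewrite inE z0 mul0r addr0; case: (eqVneq y 0) => [y0|yn].
      move: nz; rewrite y0 z0 eqxx orbF /= => nx.
      by rewrite !inE mul0r addr0 (negbTE nx).
    rewrite !inE; have -> : x + y * t = y * (t - - (x / y)) by field.
    by rewrite mulf_eq0 (negbTE yn) subr_eq0.
  by case: (eqVneq y 0) => [y0|yn]; rewrite ?cards0 ?cards1.
case: (eqVneq y 0) => [y0|yn].
  have [g _ gK] := injF_bij sq_inj.
  set r := g (- (x / z)).
  have hr : x + y * r + z * r ^+ 2 = 0.
    have := gK (- (x / z)); rewrite -/r /= => ->.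
    rewrite y0 mul0r addr0; field; exact: zn.
  by rewrite (quad_roots zn hr) cards2 y0 mul0r oppr0 sub0r negc2 eqxx /=.
rewrite /= add0n.
case: (set_0Vmem [set t | x + y * t + z * t ^+ 2 == 0]) => [->|[t0 t0in]].
  by rewrite cards0.
rewrite inE in t0in; rewrite (quad_roots zn (eqP t0in)) cards2.
suff -> : t0 != -(y / z) - t0 by [].
apply: contra yn => /eqP h.
have : -(y / z) = 0.
  by rewrite -(subrK t0 (-(y/z))) -h -{1}(negc2 t0) addNr.
by move/eqP; rewrite oppr_eq0 mulf_eq0 invr_eq0 (negbTE zn) orbF.
Qed.

Definition row3 (a b c : F) : 'rV[F]_3 := \row_(k < 3) nth 0 [:: a; b; c] k.

Lemma dot3 v a b c : dot v (row3 a b c) =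
  v 0 ord0 * a + v 0 (lift ord0 ord0) * b + v 0 (lift ord0 (lift ord0 ord0)) * c.
Proof. by rewrite /dot !big_ord_recl big_ord0 !mxE /= addr0 addrA. Qed.

Definition nrm (o : option (option F)) : 'rV[F]_3 :=
  match o with
  | None => row3 0 1 0
  | Some None => row3 0 0 1
  | Some (Some t) => row3 1 t (t ^+ 2)
  end.

Lemma nrm_nz o : nrm o != 0.
Proof.
case: o => [[t|]|]; apply/eqP => /rowP.
- by move/(_ ord0); rewrite !mxE /= => /eqP; rewrite oner_eq0.
- by move/(_ (lift ord0 (lift ord0 ord0))); rewrite !mxE /= => /eqP; rewrite oner_eq0.
- by move/(_ (lift ord0 ord0)); rewrite !mxE /= => /eqP; rewrite oner_eq0.
Qed.

Definition hcw : {ffun PGline F -> 'F_2} :=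
  [ffun j => \sum_(o | lnof (nrm o) == j) 1].

Lemma sum_option (T : finType) (f : option T -> 'F_2) :
  \sum_o f o = f None + \sum_t f (Some t).
Proof.
rewrite (bigD1 None) //=; congr (_ + _).
rewrite (reindex_omap Some id) /=; last by case.
by apply: eq_bigl => t; rewrite eqxx.
Qed.

Lemma f2_nat n : (n%:R : 'F_2) = (odd n)%:R.
Proof.
elim: n => [//|n IH]; rewrite -natr1 IH /=.
by case: (odd n); apply/val_inj.
Qed.

Lemma hcw_code : hcw \in code (@PGinc F).
Proof.
apply/forallP => p; apply/eqP.
have [v nv ->] := pt_rep p.
rewrite /syndrome.
have -> : \sum_(j | PGinc (ptof v) j) hcw j =
          \sum_(o | PGinc (ptof v) (lnof (nrm o))) (1 : 'F_2).
  rewrite (partition_big (fun o => lnof (nrm o)) (fun j => PGinc (ptof v) j)) //=.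
  apply: eq_bigr => j ij; rewrite ffunE; apply: eq_bigl => o.
  by case: eqP => [->|]; rewrite ?ij ?andbF.
under eq_bigl do rewrite inc_pl ?nrm_nz //.
rewrite big_mkcond /= sum_option sum_option /= !dot3.
set x := v 0 ord0; set y := v 0 (lift ord0 ord0); set z := v 0 (lift ord0 (lift ord0 ord0)).
rewrite !mulr0 !mulr1 !addr0 !add0r.
have -> : \sum_t (if dot v (row3 1 t (t ^+ 2)) == 0 then 1 else 0 : 'F_2)
       = (#|[set t | x + y * t + z * t ^+ 2 == 0]|)%:R.
  rewrite -big_mkcond /= -sum1_card natr_sum; apply: eq_bigl => t.
  by rewrite inE dot3 mulr1.
have nz : [|| x != 0, y != 0 | z != 0].
  apply: contraR nv; rewrite !negb_or !negbK => /and3P[/eqP x0 /eqP y0 /eqP z0].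
  apply/eqP/rowP => k; rewrite mxE.
  case: k => [[|[|[|//]]] Hk].
  - by rewrite -x0; congr (v 0 _); apply: val_inj.
  - by rewrite -y0; congr (v 0 _); apply: val_inj.
  - by rewrite -z0; congr (v 0 _); apply: val_inj.
have := parity nz.
rewrite addrA.
have -> : ((if y == 0 then 1 else 0) : 'F_2) = (y == 0)%:R by case: (y == 0).
have -> : ((if z == 0 then 1 else 0) : 'F_2) = (z == 0)%:R by case: (z == 0).
rewrite -!natrD f2_nat => /negbTE ->.
by [].
Qed.

Lemma hcw_pos : (0 < wt hcw)%N.
Proof.
rewrite /wt card_gt0; apply/set0Pn; exists (lnof (nrm None)); rewrite inE ffunE.
rewrite (big_pred1 None) ?oner_eq0 //.
move=> o; rewrite /=; case: o => [o|]; last by rewrite !eqxx.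
apply/negbTE; apply/eqP => h.
case: o h => [t|] h.
- have := inc_pl (nrm_nz (Some (Some 0))) (nrm_nz None).
  rewrite -h inc_pl ?nrm_nz // /= !dot3 !mxE /= expr0n /=.
  by rewrite !(mul0r, mulr0, mulr1, mul1r, add0r, addr0) eqxx oner_eq0.
- have := inc_pl (nrm_nz (Some None)) (nrm_nz None).
  rewrite -h inc_pl ?nrm_nz // /= !dot3 !mxE /=.
  by rewrite !(mul0r, mulr0, mulr1, mul1r, add0r, addr0) eqxx oner_eq0.
Qed.

Lemma hcw_wt : (wt hcw <= #|F|.+2)%N.
Proof.
rewrite /wt -card_option -card_option -cardsT.
apply: leq_trans _ (leq_imset_card (fun o => lnof (nrm o)) setT).
apply: subset_leq_card; apply/subsetP => j; rewrite inE ffunE.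
apply: contraR => nj; rewrite big_pred0 // => o.
by apply: contraNF nj => /eqP <-; apply: imset_f.
Qed.
End Geo.

Lemma final_arith (q d w : nat) : ~~ odd q -> (d <= q.+2)%N -> (w <= d.-1./2)%N ->
  (2 * w <= q)%N.
Proof.
move=> qe dq wd.
have h1 := odd_double_half d.-1.
have h2 := odd_double_half q; rewrite (negbTE qe) in h2.
move: (d.-1./2) h1 wd => a h1 wd.
move: (q./2) h2 => b h2.
move: (odd d.-1) h1 => [] /= h1; rewrite -!muln2 in h1 h2; lia.
Qed.

Unset Implicit Arguments.

Theorem theorem3p5 (F : finFieldType) (q_even : ~~ odd #|F|)
    (c e : {ffun PGline F -> 'F_2}) :
  c \in code (@PGinc F) ->
  (wt e <= (mindist (@PGinc F)).-1./2)%N ->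
  bitflip (@PGinc F) [ffun j => c j + e j] = c.
Proof.
move=> hc hw.
have two0 := char2 q_even.
apply: (bf_correct (@two_lines F) hc (@colweight_ge F)).
apply: final_arith q_even _ hw.
apply: leq_trans (hcw_wt F).
apply: bigmin_le.
by rewrite (hcw_code two0) hcw_pos.
Qed.
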